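(* Let $\{\Pi_i\}_{i=1}^n$ be a qubit POVM with $\Pi_i=\alpha_i(\mathbb{I}+\hat n_i\cdot\vec\sigma)$, $\alpha_i\ge0$, $\hat n_i$ unit, $\sum_i\alpha_i=1$, $\sum_i\alpha_i\hat n_i=\vec0$, and let $\mathrm{sym}\{\Pi_i\}$ be the $2n$-outcome POVM $\{\tfrac{\alpha_i}{2}(\mathbb{I}+\hat n_i\cdot\vec\sigma),\tfrac{\alpha_i}{2}(\mathbb{I}-\hat n_i\cdot\vec\sigma)\}_{i=1}^n$. Then $$R(\mathrm{sym}\{\Pi_i\})=\min_{\hat c\in\mathbb{R}^3,\ |\hat c|=1}\ \sum_{i=1}^n\alpha_i|\hat c\cdot\hat n_i|.$$
   Context: A POVM $\{\Pi_i\}$ simulates a family $\{M_{a|x}\}$ if $M_{a|x}=\sum_i p(a|x,i)\Pi_i$ with $p(a|x,i)\ge0$, $\sum_a p(a|x,i)=1$. $\mathcal{P}_r$ is the family of two-outcome POVMs $\{\tfrac12(\mathbb{I}\pm r\hat n\cdot\vec\sigma)\}$ over all unit $\hat n\in\mathbb{R}^3$. $R(\{\Pi_i\})$ is the largest $r$ such that $\{\Pi_i\}$ simulates $\mathcal{P}_r$. *)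

(* Defs.v *)
From HB Require Import structures.
From mathcomp Require Import all_boot all_order all_algebra.
From mathcomp Require Import complex.
From mathcomp Require Import reals.
Set Implicit Arguments. Unset Strict Implicit. Unset Printing Implicit Defensive.
Import Order.TTheory GRing.Theory Num.Theory.
Local Open Scope ring_scope.

Section Qubit.
Variable R : realType.
Local Notation C := (R[i]).

Definition sigmaX : 'M[C]_2 :=
  \matrix_(i < 2, j < 2) (if i == j then 0 else 1).
Definition sigmaY : 'M[C]_2 :=
  \matrix_(i < 2, j < 2)
    (if i == j then 0 else if (i : nat) == 0%N then - (Complex 0 1) else Complex 0 1).
Definition sigmaZ : 'M[C]_2 :=
  \matrix_(i < 2, j < 2) (if i == j then (if (i : nat) == 0%N then 1 else -1) else 0).

Definition rC (x : R) : C := Complex x 0.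

Definition pauli_dot (v : 'rV[R]_3) : 'M[C]_2 :=
  rC (v 0 0) *: sigmaX + rC (v 0 1) *: sigmaY + rC (v 0 2%:R) *: sigmaZ.

Definition dot3 (u v : 'rV[R]_3) : R := \sum_(j < 3) u 0 j * v 0 j.
Definition is_unit3 (v : 'rV[R]_3) : Prop := dot3 v v = 1.

Definition simulates (I : finType) (X : Type) (A : finType)
  (Pi : I -> 'M[C]_2) (M : X -> A -> 'M[C]_2) : Prop :=
  exists p : X -> A -> I -> R,
    (forall x a i, 0 <= p x a i) /\
    (forall x i, \sum_(a : A) p x a i = 1) /\
    (forall x a, M x a = \sum_(i : I) rC (p x a i) *: Pi i).

(* The family P_r, indexed by unit vectors n and outcomes a in bool
   (true = '+', false = '-'). *)
Definition unitvec := {v : 'rV[R]_3 | dot3 v v == 1}.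
Definition Pfam (r : R) : unitvec -> bool -> 'M[C]_2 :=
  fun n a => rC (1/2) *: (1%:M + rC (if a then r else - r) *: pauli_dot (val n)).

Definition isR (I : finType) (Pi : I -> 'M[C]_2) (r : R) : Prop :=
  simulates Pi (Pfam r) /\ (forall r', simulates Pi (Pfam r') -> r' <= r).

Definition symPOVM (n : nat) (alpha : 'I_n -> R) (nv : 'I_n -> 'rV[R]_3)
  : 'I_n * bool -> 'M[C]_2 :=
  fun ib => rC (alpha ib.1 / 2) *:
    (1%:M + rC (if ib.2 then 1 else -1) *: pauli_dot (nv ib.1)).

End Qubit.

(* Main.v *)
Require Import Defs.
From HB Require Import structures.
From mathcomp Require Import all_boot all_order all_algebra.
From mathcomp Require Import complex.
From mathcomp Require Import reals.
From mathcomp Require Import all_classical all_reals all_analysis.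
From mathcomp Require Import ring lra.
Import Order.TTheory GRing.Theory Num.Theory.
Import numFieldNormedType.Exports.
Local Open Scope ring_scope.

Notation cRe := complex.Re.
Notation cIm := complex.Im.
Section S.
Variable R : realType.
Local Notation C := (R[i]).
Lemma cplxE (z w : C) : cRe z = cRe w -> cIm z = cIm w -> z = w.
Proof. by case: z w => a b [c d] /= -> ->. Qed.
Lemma ReD (z w : C) : cRe (z + w) = cRe z + cRe w. Proof. by case: z w => a b [c d]. Qed.
Lemma ImD (z w : C) : cIm (z + w) = cIm z + cIm w. Proof. by case: z w => a b [c d]. Qed.
Lemma ReM (z w : C) : cRe (z * w) = cRe z * cRe w - cIm z * cIm w. Proof. by case: z w => a b [c d]. Qed.
Lemma ImM (z w : C) : cIm (z * w) = cRe z * cIm w + cIm z * cRe w. Proof. by case: z w => a b [c d]. Qed.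
Lemma ReN (z : C) : cRe (- z) = - cRe z. Proof. by case: z. Qed.
Lemma ImN (z : C) : cIm (- z) = - cIm z. Proof. by case: z. Qed.
Lemma Re0 : cRe (0 : C) = 0. Proof. by []. Qed.
Lemma Im0 : cIm (0 : C) = 0. Proof. by []. Qed.
Lemma Re1 : cRe (1 : C) = 1. Proof. by []. Qed.
Lemma Im1 : cIm (1 : C) = 0. Proof. by []. Qed.
Lemma Ren (k : nat) : cRe (k%:R : C) = k%:R.
Proof. elim: k => // k IH; by rewrite !mulrS ReD IH. Qed.
Lemma Imn (k : nat) : cIm (k%:R : C) = 0.
Proof. elim: k => // k IH; by rewrite !mulrS ImD IH addr0. Qed.
Lemma ReSum (I : Type) (r : seq I) (F : I -> C) : cRe (\sum_(i <- r) F i) = \sum_(i <- r) cRe (F i).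
Proof. elim: r => [|a r IH]; rewrite ?big_nil ?big_cons //. by rewrite ReD IH. Qed.
Lemma ImSum (I : Type) (r : seq I) (F : I -> C) : cIm (\sum_(i <- r) F i) = \sum_(i <- r) cIm (F i).
Proof. elim: r => [|a r IH]; rewrite ?big_nil ?big_cons //. by rewrite ImD IH. Qed.
Definition E (a : R) (v : 'rV[R]_3) : 'M[C]_2 :=
  \matrix_(i < 2, j < 2)
   match nat_of_ord i, nat_of_ord j with
   | 0%N, 0%N => Complex (a + v 0 2%:R) 0
   | 0%N, _ => Complex (v 0 0) (- v 0 1)
   | _, 0%N => Complex (v 0 0) (v 0 1)
   | _, _ => Complex (a - v 0 2%:R) 0
   end.

Lemma E_inj a v b w : E a v = E b w -> a = b /\ v = w.
Proof.
move/matrixP => H.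
have H00 := H ord0 ord0. have H01 := H ord0 (@Ordinal 2 1 isT).
have H10 := H (@Ordinal 2 1 isT) ord0. have H11 := H (@Ordinal 2 1 isT) (@Ordinal 2 1 isT).
move: H00 H01 H10 H11; rewrite !mxE /= => [[e1]] [e2 e3] [e4 e5] [e6].
have e7 : a = b by rewrite -[a](addrK (v 0 2%:R)) -[b](addrK (w 0 2%:R)); lra.
split => //.
apply/rowP => k; rewrite ?mxE.
have : (v 0 2%:R = w 0 2%:R) by lra.
case: k => [[|[|[|k]]] Hk] //=.
- by rewrite (_ : Ordinal Hk = 0) //; apply/val_inj.
- by rewrite (_ : Ordinal Hk = 1) //; apply/val_inj.
- by rewrite (_ : Ordinal Hk = 2%:R) //; apply/val_inj.
Qed.
Ltac entries := apply/matrixP; case => [[|[|?]] ?]; case => [[|[|?]] ?]; rewrite ?mxE //=.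

Lemma E_scale p a v : rC p *: E a v = E (p * a) (p *: v).
Proof. entries; rewrite ?mxE; apply: cplxE => /=; rewrite /rC /=; ring. Qed.

Lemma E_add a v b w : E a v + E b w = E (a + b) (v + w).
Proof. entries; rewrite ?mxE; apply: cplxE => /=; ring. Qed.

Lemma E_sum (I : Type) (r : seq I) (a : I -> R) (v : I -> 'rV[R]_3) :
  \sum_(k <- r) E (a k) (v k) = E (\sum_(k <- r) a k) (\sum_(k <- r) v k).
Proof.
elim: r => [|x r IH]; rewrite ?big_nil ?big_cons.
  by entries; rewrite ?mxE; apply: cplxE => /=; ring.
by rewrite IH E_add.
Qed.
Lemma pauli_E v : pauli_dot v = E 0 v.
Proof. rewrite /pauli_dot; entries; rewrite /sigmaX /sigmaY /sigmaZ ?mxE /=; apply: cplxE => /=; ring. Qed.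
Lemma one_E : (1%:M : 'M[C]_2) = E 1 0.
Proof. entries; apply: cplxE => /=; rewrite ?mxE /=; ring. Qed.

Lemma Pfam_E r (x : unitvec R) b :
  Pfam r x b = E (1/2) (((if b then r else - r) / 2) *: val x).
Proof.
rewrite /Pfam pauli_E one_E E_scale E_add E_scale; congr E.
  rewrite mulr0. rewrite addr0. rewrite mulr1. done.
by rewrite scalerDr scaler0 add0r scalerA; congr (_ *: _); rewrite mulrC mul1r.
Qed.

Lemma sym_E n (alpha : 'I_n -> R) (nv : 'I_n -> 'rV[R]_3) i s :
  symPOVM alpha nv (i, s) = E (alpha i / 2) ((alpha i / 2 * (if s then 1 else -1)) *: nv i).
Proof.
rewrite /symPOVM pauli_E one_E E_scale E_add E_scale /=; congr E.
  rewrite mulr0. rewrite addr0. rewrite mulr1. done.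
by rewrite scalerDr scaler0 add0r scalerA.
Qed.
End S.

Section T.
Local Open Scope classical_set_scope.


Lemma box_min (R : realType) n (f : 'rV[R]_n -> R) : continuous f ->
  exists2 t : 'rV[R]_n, (forall i, -1 <= t 0 i <= 1) &
    forall t' : 'rV[R]_n, (forall i, -1 <= t' 0 i <= 1) -> f t <= f t'.
Proof.
move=> cf.
pose A := [set v : 'rV[R]_n | forall i, `[(-1 : R), 1]%classic (v ord0 i)].
have cA : compact A by apply: (@rV_compact _ _ (fun=> `[(-1 : R), 1]%classic)) => i; exact: segment_compact.
have A0 : A !=set0.
  exists 0 => i /=; rewrite mxE in_itv /=; apply/andP; split => //.
have [t tA tmin] := EVT_min_rV A0 cA (continuous_subspaceT cf).
exists t.
  move=> i; move: tA; rewrite inE => /(_ i) /=. by rewrite in_itv.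
move=> t' Ht'; apply: tmin; rewrite inE => i /=; rewrite in_itv /=; exact: Ht'.
Qed.

Lemma cont_sum (R : realType) n (I : Type) (r : seq I) (G : I -> 'rV[R]_n -> R) :
  (forall i, continuous (G i)) -> continuous (fun t => \sum_(i <- r) G i t).
Proof.
move=> cG; elim: r => [|a r IH].
  have -> : (fun t => \sum_(i <- [::]) G i t) = (fun _ => 0) by apply/funext => t; rewrite big_nil.
  exact: cst_continuous.
have -> : (fun t => \sum_(i <- a :: r) G i t) = (G a + (fun t => \sum_(i <- r) G i t)).
  by apply/funext => t; rewrite big_cons.
by move=> x; apply: continuousD; [exact: cG | exact: IH].
Qed.

End T.

Section Dot.
Variable R : realType.
Implicit Types u v w : 'rV[R]_3.

Lemma dot3C u v : dot3 u v = dot3 v u.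
Proof. by apply: eq_bigr => j _; rewrite mulrC. Qed.
Lemma dot3Dr u v w : dot3 u (v + w) = dot3 u v + dot3 u w.
Proof. by rewrite /dot3 -big_split; apply: eq_bigr => j _; rewrite mxE mulrDr. Qed.
Lemma dot3Zr u a v : dot3 u (a *: v) = a * dot3 u v.
Proof. by rewrite /dot3 mulr_sumr; apply: eq_bigr => j _; rewrite mxE mulrCA. Qed.
Lemma dot30r u : dot3 u 0 = 0.
Proof. by rewrite /dot3 big1 // => j _; rewrite mxE mulr0. Qed.
Lemma dot3Nr u v : dot3 u (- v) = - dot3 u v.
Proof. by rewrite -scaleN1r dot3Zr mulN1r. Qed.
Lemma dot3Br u v w : dot3 u (v - w) = dot3 u v - dot3 u w.
Proof. by rewrite dot3Dr dot3Nr. Qed.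
Lemma dot3Dl u v w : dot3 (v + w) u = dot3 v u + dot3 w u.
Proof. by rewrite dot3C dot3Dr !(dot3C u). Qed.
Lemma dot3Bl u v w : dot3 (v - w) u = dot3 v u - dot3 w u.
Proof. by rewrite dot3C dot3Br !(dot3C u). Qed.
Lemma dot3Zl u a v : dot3 (a *: v) u = a * dot3 v u.
Proof. by rewrite dot3C dot3Zr dot3C. Qed.
Lemma dot3_sumr (I : Type) (r : seq I) (P : pred I) u (F : I -> 'rV[R]_3) :
  dot3 u (\sum_(i <- r | P i) F i) = \sum_(i <- r | P i) dot3 u (F i).
Proof. exact: (big_morph (dot3 u) (dot3Dr u) (dot30r u)). Qed.
Lemma dot3_ge0 v : 0 <= dot3 v v.
Proof. by apply: sumr_ge0 => j _; rewrite -expr2 sqr_ge0. Qed.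
Lemma dot3_eq0 v : dot3 v v = 0 -> v = 0.
Proof.
move=> /eqP; rewrite psumr_eq0 => [/allP H|j _]; last by rewrite -expr2 sqr_ge0.
apply/rowP => j; rewrite mxE; have := H j (mem_index_enum _).
by rewrite -expr2 sqrf_eq0 => /eqP.
Qed.

Lemma quad_pos (t g a : R) : -1 <= t <= 1 -> 0 <= a -> 0 < g ->
  (forall s, -1 <= s <= 1 -> 0 <= (s - t)^+2 * a - 2 * (s - t) * g) -> t = 1.
Proof.
move=> /andP [t1 t2] a0 g0 H.
have [//|tl] := eqVneq t 1.
have tlt : t < 1 by rewrite lt_neqAle tl t2.
set d := 1 - t. have d0 : 0 < d by rewrite subr_gt0.
have gda : 0 < g + d * a by apply: ltr_wpDr => //; apply: mulr_ge0 => //; apply: ltW.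
set e := d * g / (g + d * a).
have e0 : 0 < e by apply: divr_gt0 => //; exact: mulr_gt0.
have he : e * (g + d * a) = d * g by rewrite /e divfK // gt_eqF.
have ed : e <= d by nra.
have := H (t + e); rewrite addrAC subrr add0r.
have -> : (-1 <= t + e <= 1) = true by apply/andP; split; rewrite /d in ed; lra.
move=> /(_ isT) H2.
have H3 : 0 <= d * (e^+2 * a - 2 * e * g) by apply: mulr_ge0 => //; apply: ltW.
have H4 : e * (e * (g + d * a)) = e * (d * g) by rewrite he.
have H5 : 0 < d * e * g by do 2 apply: mulr_gt0 => //.
have H6 : 0 < e * e * g by do 2 apply: mulr_gt0 => //.
nra.
Qed.

Lemma quad (t g a : R) : -1 <= t <= 1 -> 0 <= a ->
  (forall s, -1 <= s <= 1 -> 0 <= (s - t)^+2 * a - 2 * (s - t) * g) -> t * g = `|g|.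
Proof.
move=> ht a0 H.
have [g0|g0|->] := ltgtP g 0; last by rewrite mulr0 normr0.
- have ht' : -1 <= - t <= 1 by move/andP: ht => [? ?]; apply/andP; split; lra.
  have g0' : 0 < - g by rewrite oppr_gt0.
  have Hq : - t = 1.
    apply: (@quad_pos (-t) (-g) a ht' a0 g0') => s hs.
    have hs' : -1 <= - s <= 1 by move/andP: hs => [? ?]; apply/andP; split; lra.
    have := H (- s) hs'; congr (_ <= _); ring.
  have -> : t = -1 by rewrite -Hq opprK.
  by rewrite ltr0_norm // mulN1r.
- rewrite (@quad_pos t g a ht a0 g0 H) mul1r gtr0_norm //.
Qed.
End Dot.

Section Zono.
Variable R : realType.
Variables (n : nat) (alpha : 'I_n -> R) (nv : 'I_n -> 'rV[R]_3).
Hypothesis alpha_ge0 : forall i, 0 <= alpha i.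
Hypothesis nv_unit : forall i, is_unit3 (nv i).
Variable m : R.
Hypothesis m_ge0 : 0 <= m.
Hypothesis m_lower : forall c : 'rV[R]_3, is_unit3 c -> m <= \sum_(i < n) alpha i * `|dot3 c (nv i)|.
Variable x : 'rV[R]_3.
Hypothesis xu : dot3 x x = 1.

Lemma contB k (f g : 'rV[R]_k -> R) : continuous f -> continuous g -> continuous (fun t => f t - g t).
Proof. by move=> cf cg t; exact: (continuousB (cf t) (cg t)). Qed.
Lemma contM k (f g : 'rV[R]_k -> R) : continuous f -> continuous g -> continuous (fun t => f t * g t).
Proof. by move=> cf cg t; exact: (continuousM (cf t) (cg t)). Qed.

Definition wv (t : 'rV[R]_n) := m *: x - \sum_(i < n) (alpha i * t 0 i) *: nv i.

Lemma wv_cont : continuous (fun t => dot3 (wv t) (wv t)).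
Proof.
have -> : (fun t => dot3 (wv t) (wv t)) = fun t => \sum_(j < 3)
   ((m * x 0 j - \sum_(i < n) alpha i * t 0 i * nv i 0 j) *
    (m * x 0 j - \sum_(i < n) alpha i * t 0 i * nv i 0 j)).
  apply/funext => t; apply: eq_bigr => j _.
  have -> : wv t 0 j = m * x 0 j - \sum_(i < n) alpha i * t 0 i * nv i 0 j.
    by rewrite /wv !mxE summxE; congr (_ - _); apply: eq_bigr => i _; rewrite mxE.
  done.
apply: cont_sum => j.
have cg : continuous (fun t : 'rV[R]_n => m * x 0 j - \sum_(i < n) alpha i * t 0 i * nv i 0 j).
  apply: contB; first exact: cst_continuous.
  apply: cont_sum => i; apply: contM; last exact: cst_continuous.
  apply: contM; first exact: cst_continuous.
  exact: coord_continuous.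
exact: contM.
Qed.

Lemma wv_pert (t : 'rV[R]_n) i (c : R) :
  wv (t + c *: delta_mx 0 i) = wv t - (c * alpha i) *: nv i.
Proof.
rewrite /wv.
have -> : \sum_(k < n) (alpha k * (t + c *: delta_mx 0 i) 0 k) *: nv k =
   \sum_(k < n) (alpha k * t 0 k) *: nv k + (c * alpha i) *: nv i.
  under eq_bigr => k _ do rewrite !mxE mulrDr scalerDl.
  rewrite big_split /=; congr (_ + _).
  rewrite (bigD1 i) //= big1 ?addr0.
    by rewrite !eqxx mulr1 mulrC.
  by move=> k /negbTE ki; rewrite ki ?andbF ?andbT ?mulr0 ?scale0r.
by rewrite opprD addrA.
Qed.

Lemma zono : exists t : 'I_n -> R, (forall i, -1 <= t i <= 1) /\
   \sum_(i < n) (alpha i * t i) *: nv i = m *: x.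
Proof.
have [t tbox tmin] := @box_min _ _ _ wv_cont.
move: tmin; move Wdef : (wv t) => W tmin.
have key : forall i, t 0 i * (alpha i * dot3 W (nv i)) = alpha i * `|dot3 W (nv i)|.
  move=> i; rewrite -[alpha i in RHS]ger0_norm // -normrM.
  apply: (@quad _ _ _ (alpha i ^+ 2)); first exact: tbox.
    exact: sqr_ge0.
  move=> s hs.
  have hbox : forall k, -1 <= (t + (s - t 0 i) *: delta_mx 0 i) 0 k <= 1.
    move=> k; rewrite !mxE; case: (eqVneq k i) => [->|ki].
      by rewrite !eqxx mulr1 addrC subrK.
    by rewrite andbF mulr0 addr0; exact: tbox.
  have := tmin _ hbox.
  rewrite wv_pert Wdef.
  rewrite dot3Br !dot3Bl !dot3Zr !dot3Zl (@dot3C _ (nv i) W).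
  have -> : dot3 (nv i) (nv i) = 1 by exact: nv_unit.
  rewrite -subr_ge0; congr (_ <= _); ring.
set S := \sum_(i < n) alpha i * `|dot3 W (nv i)|.
have Sv : dot3 W (\sum_(i < n) (alpha i * t 0 i) *: nv i) = S.
  rewrite dot3_sumr; apply: eq_bigr => i _; rewrite dot3Zr -key; ring.
have WW : W = m *: x - \sum_(i < n) (alpha i * t 0 i) *: nv i by rewrite -Wdef.
have Wq : dot3 W W = m * dot3 W x - S by rewrite {2}WW dot3Br dot3Zr Sv.
have CS : dot3 W x ^+ 2 <= dot3 W W.
  have := @dot3_ge0 _ (W - dot3 W x *: x).
  rewrite dot3Br !dot3Bl !dot3Zr !dot3Zl xu (@dot3C _ x W) => H; nra.
have S0 : 0 <= S by apply: sumr_ge0 => i _; apply: mulr_ge0.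
have := @dot3_ge0 _ W; rewrite le0r => /orP [/eqP q0 | qpos].
  have W0 := @dot3_eq0 _ _ q0.
  exists (fun i => t 0 i); split; first exact: tbox.
  by apply/eqP; rewrite eq_sym -subr_eq0 -WW W0.
exfalso.
set N := Num.sqrt (dot3 W W).
have N0 : 0 < N by rewrite sqrtr_gt0.
have N2 : N ^+ 2 = dot3 W W by rewrite sqr_sqrtr // ltW.
have cu : is_unit3 (N^-1 *: W).
  rewrite /is_unit3 dot3Zr dot3Zl -N2; field; exact: lt0r_neq0.
have := m_lower _ cu.
have -> : \sum_(i < n) alpha i * `|dot3 (N^-1 *: W) (nv i)| = N^-1 * S.
  rewrite /S mulr_sumr; apply: eq_bigr => i _.
  have Ni : 0 <= N^-1 by rewrite invr_ge0 ltW.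
  by rewrite dot3Zl normrM (ger0_norm Ni) mulrCA.
move=> hm.
have hm2 : N * m <= S.
  have := ler_wpM2l (ltW N0) hm; rewrite mulrA mulfV ?mul1r //; exact: lt0r_neq0.
have hx : dot3 W x <= N by nra.
have := ler_wpM2l m_ge0 hx; nra.
Qed.
End Zono.

Lemma sum_sym (R : realType) n (alpha : 'I_n -> R) (nv : 'I_n -> 'rV[R]_3)
  (q : 'I_n * bool -> R) :
  \sum_(k : 'I_n * bool) rC (q k) *: symPOVM alpha nv k =
  @E R (\sum_(i < n) alpha i / 2 * (q (i, true) + q (i, false)))
    (\sum_(i < n) (alpha i / 2 * (q (i, true) - q (i, false))) *: nv i).
Proof.
rewrite (eq_bigr (fun p => (fun i b => rC (q (i, b)) *: symPOVM alpha nv (i, b)) p.1 p.2));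
  last by case.
rewrite -(pair_bigA _ (fun i b => rC (q (i, b)) *: symPOVM alpha nv (i, b))) /=.
under eq_bigr => i _ do rewrite big_bool /= !sym_E !E_scale E_add.
rewrite E_sum; congr E.
  by apply: eq_bigr => i _; ring.
apply: eq_bigr => i _; rewrite !scalerA -scalerDl; congr (_ *: _); ring.
Qed.

Theorem mainTheorem15 (R : realType) (n : nat)
  (alpha : 'I_n -> R) (nv : 'I_n -> 'rV[R]_3)
  (alpha_ge0 : forall i, 0 <= alpha i)
  (nv_unit : forall i, is_unit3 (nv i))
  (alpha_sum : \sum_(i < n) alpha i = 1)
  (alpha_nv_sum : \sum_(i < n) alpha i *: nv i = 0)
  (m : R)
  (m_attained : exists c : 'rV[R]_3,
      is_unit3 c /\ m = \sum_(i < n) alpha i * `|dot3 c (nv i)|)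
  (m_lower : forall c : 'rV[R]_3,
      is_unit3 c -> m <= \sum_(i < n) alpha i * `|dot3 c (nv i)|) :
  isR (symPOVM alpha nv) m.
Proof.
have m_ge0 : 0 <= m.
  by case: m_attained => c [_ ->]; apply: sumr_ge0 => i _; apply: mulr_ge0.
split.
- have ex : forall x : unitvec R, exists t : 'I_n -> R, (forall i, -1 <= t i <= 1) /\
     \sum_(i < n) (alpha i * t i) *: nv i = m *: val x.
    by move=> [x /eqP xu] /=; exact: (@zono R n alpha nv alpha_ge0 nv_unit m m_ge0 m_lower x xu).
  have [T HT] := choice ex.
  pose sg (b : bool) : R := if b then 1 else -1.
  exists (fun x a k => (1 + sg a * sg k.2 * T x k.1) / 2).
  split; [|split].
  + move=> x a [i s] /=; have [h1 _] := HT x; have := h1 i.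
    rewrite /sg => /andP [? ?]; apply: divr_ge0 => //.
    by case: a; case: s; lra.
  + by move=> x [i s]; rewrite big_bool /sg /=; case: s; lra.
  + move=> x a; rewrite Pfam_E sum_sym; congr E.
      have -> : (1/2 : R) = \sum_(i < n) alpha i * (1/2) by rewrite -mulr_suml alpha_sum [RHS]mul1r.
      apply: eq_bigr => i _.
      by rewrite /sg /=; case: a => /=; field.
    have [_ h2] := HT x.
    rewrite (eq_bigr (fun i => (sg a / 2) *: ((alpha i * T x i) *: nv i))).
      by rewrite -scaler_sumr h2 scalerA /sg; congr (_ *: _); case: a => /=; field.
    by move=> i _; rewrite scalerA; congr (_ *: _); rewrite /sg /=; case: a => /=; field.
- move=> r' [p [p0 [p1 peq]]].
  case: m_attained => c [cu mdef].
  pose x : unitvec R := exist _ c (introT eqP cu).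
  have := peq x true; rewrite Pfam_E sum_sym => /E_inj [_ hv].
  have := congr1 (dot3 c) hv.
  rewrite dot3Zr /= cu dot3_sumr mulr1 => hr.
  have : r' / 2 <= m / 2.
    rewrite hr mdef mulr_suml; apply: ler_sum => i _.
    rewrite dot3Zr.
    have := p1 x (i, true); have := p1 x (i, false); rewrite !big_bool /= => e1 e2.
    have := p0 x true (i, true); have := p0 x false (i, true).
    have := p0 x true (i, false); have := p0 x false (i, false).
    move=> q1 q2 q3 q4.
    have ha := alpha_ge0 i.
    set d := dot3 c (nv i).
    set dl := p x true (i, true) - p x true (i, false).
    have hd1 : 0 <= 1 - dl by rewrite /dl; lra.
    have hd2 : 0 <= 1 + dl by rewrite /dl; lra.
    case: (lerP 0 d) => hd; [rewrite ger0_norm // | rewrite ltr0_norm //].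
      have := mulr_ge0 (mulr_ge0 ha hd) hd1; nra.
    have hd' : 0 <= - d by lra.
    have := mulr_ge0 (mulr_ge0 ha hd') hd2; nra.
  lra.
Qed.
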